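(* Let $F$ be a dill map on $A^{\mathbb N}$ with diameter $\delta$ and local rule $f$. The following are equivalent: (1) $F$ induces a well-defined map on the Besicovitch space, i.e. for all $x,y\in A^{\mathbb N}$, $\mathfrak d_H(x,y)=0$ implies $\mathfrak d_H(F(x),F(y))=0$; (2) $F$ is $\frac{\delta D_{\max}}{\lfloor f\rfloor}$-Lipschitz with respect to $\mathfrak d_H$, i.e. $\mathfrak d_H(F(x),F(y))\le \frac{\delta D_{\max}}{\lfloor f\rfloor}\,\mathfrak d_H(x,y)$ for all $x,y\in A^{\mathbb N}$; (3) $F$ is either a constant map or uniform.
   Context: $A$ is a finite alphabet, $A^{\mathbb N}$ the infinite sequences over $A$, $x_{[i,j)}=x_i\cdots x_{j-1}$. A dill map with diameter $\delta\ge1$ and local rule $f:A^\delta\to A^+$ (nonempty words) is $F(x)=f(x_{[0,\delta)})f(x_{[1,\delta+1)})\cdots$. Lower norm $\lfloor f\rfloor=\min\{|f(u)|:u\in A^\delta\}$, upper norm $\lceil f\rceil=\max\{|f(u)|:u\in A^\delta\}$; $F$ is uniform if $\lfloor f\rfloor=\lceil f\rceil$. For words $u,v$ of equal length, $d_H(u,v)$ is the number of positions where they differ. $D_{\max}=\max\{d_H(f(u),f(v)):u,v\in A^\delta\}$ (taken over pairs with $|f(u)|=|f(v)|$). The Besicovitch pseudo-metric is $\mathfrak d_H(x,y)=\limsup_{l\to\infty}\frac{d_H(x_{[0,l)},y_{[0,l)})}{l}$. *)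

(* Defs.v *)
From mathcomp Require Import all_boot all_order all_algebra.
From mathcomp Require Import all_classical all_reals.
From mathcomp Require Import constructive_ereal ereal sequences.
Set Implicit Arguments. Unset Strict Implicit. Unset Printing Implicit Defensive.
Import Order.TTheory GRing.Theory Num.Theory.

Section Dill.
Variable A : finType.

Definition window (d : nat) (x : nat -> A) (k : nat) : d.-tuple A :=
  [tuple x (k + i) | i < d].

(* F(x) = f(x_[0,d)) f(x_[1,d+1)) ...  ; since every f u is nonempty,
   the first n+1 blocks have total length >= n+1, so the letter at
   position n is read off their concatenation (default x 0 never used). *)
Definition dill (d : nat) (f : d.-tuple A -> seq A) (x : nat -> A) : nat -> A :=
  fun n => nth (x 0) (flatten [seq f (window d x k) | k <- iota 0 n.+1]) n.

Definition hamw (u v : seq A) : nat := count (fun p => p.1 != p.2) (zip u v).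

Definition hamp (x y : nat -> A) (l : nat) : nat := \sum_(i < l) (x i != y i).

Definition upper_norm d (f : d.-tuple A -> seq A) : nat := \max_(u : d.-tuple A) size (f u).
Definition lower_norm d (f : d.-tuple A -> seq A) : nat :=
  \big[minn/upper_norm f]_(u : d.-tuple A) size (f u).

Definition uniform d (f : d.-tuple A -> seq A) : Prop := lower_norm f = upper_norm f.

Definition Dmax d (f : d.-tuple A -> seq A) : nat :=
  \max_(u : d.-tuple A) \max_(v : d.-tuple A | size (f u) == size (f v)) hamw (f u) (f v).

End Dill.

Definition besic (R : realType) (A : finType) (x y : nat -> A) : \bar R :=
  limn_esup (fun l => ((hamp x y l)%:R / l%:R : R)%:E).

(* Main.v *)
Require Import Defs.
From mathcomp Require Import all_boot all_order all_algebra.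
From mathcomp Require Import all_classical all_reals.
From mathcomp Require Import constructive_ereal ereal sequences.
From mathcomp Require Import topology normedtype.
From mathcomp Require Import zify ring lra.
Import Order.TTheory GRing.Theory Num.Theory.

Lemma esup_le_ev (R : realType) (u : (\bar R)^nat) (a : \bar R) (N : nat) :
  (forall n, (N <= n)%N -> (u n <= a)%E) -> (limn_esup u <= a)%E.
Proof.
move=> H; rewrite limn_esup_lim; apply: lime_le; first exact: is_cvg_esups.
near=> n; apply: ge_ereal_sup => _ [k /= nk <-]; apply: H.
apply: leq_trans nk; near: n; by exists N.
Unshelve. all: by end_near. Qed.

Lemma esup_ge_io (R : realType) (u : (\bar R)^nat) (a : \bar R) :
  (forall N, exists2 n, (N <= n)%N & (a <= u n)%E) -> (a <= limn_esup u)%E.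
Proof.
move=> H; rewrite limn_esup_lim; apply: lime_ge; first exact: is_cvg_esups.
apply: nearW => N; have [n Nn an] := H N.
apply: le_trans an _; apply: ereal_sup_ubound; by exists n.
Qed.

Lemma esup_lt_ev (R : realType) (u : (\bar R)^nat) (a : \bar R) :
  (limn_esup u < a)%E -> exists N, forall n, (N <= n)%N -> (u n < a)%E.
Proof.
move=> H; apply: contrapT => nH.
have : (a <= limn_esup u)%E.
  apply: esup_ge_io => N; apply: contrapT => nN; apply: nH; exists N => n Nn.
  rewrite ltNge; apply/negP => an; apply: nN; by exists n.
by rewrite leNgt H.
Qed.


Lemma hampS {A : finType} (x y : nat -> A) l :
  hamp x y l.+1 = hamp x y l + (x l != y l).
Proof. by rewrite /hamp big_ord_recr. Qed.

Lemma hamp_le {A : finType} (x y : nat -> A) l : (hamp x y l <= l)%N.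
Proof.
elim: l => [|l IH]; first by rewrite /hamp big_ord0.
by rewrite hampS -addn1 leq_add // leq_b1.
Qed.

Lemma hamp_mono {A : finType} (x y : nat -> A) l m :
  (l <= m)%N -> (hamp x y l <= hamp x y m)%N.
Proof.
move=> /subnKC <-; elim: (m - l)%N => [|k IH]; first by rewrite addn0.
by rewrite addnS hampS (leq_trans IH) // leq_addr.
Qed.

Lemma hamp_ev {A : finType} (x y : nat -> A) N :
  (forall j, (N <= j)%N -> x j = y j) -> forall l, (hamp x y l <= N)%N.
Proof.
move=> H l; elim: l => [|l IH]; first by rewrite /hamp big_ord0.
case: (ltnP l N) => lN.
  by rewrite (leq_trans (@hamp_mono _ x y _ _ lN)) // hamp_le.
by rewrite hampS H // eqxx addn0.
Qed.

Lemma ratio_ge0 (R : realType) {A : finType} (x y : nat -> A) l :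
  (0%E <= (((hamp x y l)%:R / l%:R : R)%R)%:E)%E.
Proof. by rewrite lee_fin divr_ge0. Qed.

Lemma ratio_le1 (R : realType) {A : finType} (x y : nat -> A) l :
  ((((hamp x y l)%:R / l%:R : R)%R)%:E <= 1%E)%E.
Proof.
rewrite lee_fin; case: l => [|l]; first by rewrite invr0 mulr0.
by rewrite ler_pdivrMr ?ltr0n // mul1r ler_nat hamp_le.
Qed.

Lemma besic_ge0 (R : realType) {A : finType} (x y : nat -> A) :
  (0 <= besic R x y)%E.
Proof.
apply: esup_ge_io => N; exists N => //; exact: ratio_ge0.
Qed.

Lemma besic_le1 (R : realType) {A : finType} (x y : nat -> A) :
  (besic R x y <= 1)%E.
Proof. apply: (@esup_le_ev _ _ _ 0) => n _; exact: ratio_le1. Qed.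

Lemma besic_fin (R : realType) {A : finType} (x y : nat -> A) :
  besic R x y = (fine (besic R x y))%:E.
Proof.
have h0 := besic_ge0 R x y; have h1 := besic_le1 R x y.
by rewrite fineK // ge0_fin_numE // (le_lt_trans h1) // ltey.
Qed.

Lemma besic_ev (R : realType) {A : finType} (x y : nat -> A) N :
  (forall j, (N <= j)%N -> x j = y j) -> besic R x y = 0%E.
Proof.
move=> H; apply/eqP; rewrite eq_le besic_ge0 andbT.
apply/lee_addgt0Pr => e e0; rewrite add0e.
have [M HM] : exists M : nat, (N%:R / e < M%:R)%R.
  exists (Num.truncn (N%:R / e)%R).+1; exact: truncnS_gt.
apply: (@esup_le_ev _ _ _ M.+1) => n Mn.
rewrite lee_fin.
have n0 : (0 < n%:R :> R)%R by rewrite ltr0n; apply: leq_trans Mn.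
rewrite ler_pdivrMr //.
apply: (@le_trans _ _ (N%:R)%R); first by rewrite ler_nat hamp_ev.
rewrite -ler_pdivrMl // mulrC; apply/ltW/(lt_le_trans HM).
by rewrite ler_nat ltnW.
Qed.

Lemma besic_io (R : realType) {A : finType} (x y : nat -> A) p0 P :
  (0 < P)%N -> (forall t, x (p0 + t * P)%N != y (p0 + t * P)%N) ->
  besic R x y <> 0%E.
Proof.
move=> P0 H.
have key : forall n, (n.+1 <= hamp x y (p0 + n * P).+1)%N.
  elim=> [|n IH]; first by have := H 0%N; rewrite mul0n addn0 hampS => -> /=; rewrite addn1 ltnS.
  rewrite hampS (H n.+1) addn1 ltnS (leq_trans IH) //.
  by apply: hamp_mono; rewrite ltn_add2l ltn_mul2r P0 ltnSn.
have : (((1 / (2 * P)%:R : R)%R)%:E <= besic R x y)%E.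
  apply: esup_ge_io => N; exists (p0 + (maxn N p0) * P).+1.
    apply: leq_trans (leq_maxl N p0) _.
    apply: leq_trans (leq_pmulr _ P0) _; apply: leq_trans (leq_addl p0 _) _; exact: leqnSn.
  rewrite lee_fin.
  have l0 : (0 < (p0 + maxn N p0 * P).+1%:R :> R)%R by rewrite ltr0n.
  rewrite ler_pdivlMr // mulrC mulrA ler_pdivrMr ?ltr0n ?muln_gt0 //.
  rewrite mulr1 -natrM ler_nat.
  apply: leq_trans _ (leq_mul (key (maxn N p0)) (leqnn (2 * P))).
  have h1 : (p0 <= maxn N p0 * P)%N.
    apply: leq_trans (leq_maxr N p0) _; exact: leq_pmulr.
  have h2 := leq_maxr N p0.
  nia.
move=> h e0; move: h; rewrite e0 lee_fin ler_pdivrMr ?ltr0n ?muln_gt0 // mul0r.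
by rewrite ler10.
Qed.


Definition blocks {A : finType} {d : nat} (f : d.-tuple A -> seq A)
  (x : nat -> A) (m : nat) : seq A :=
  flatten [seq f (window d x k) | k <- iota 0 m].

Definition shiftn {A : Type} (m : nat) (x : nat -> A) : nat -> A :=
  fun j => x (m + j).

Lemma window_shift {A : finType} d (x : nat -> A) m k :
  window d x (m + k) = window d (shiftn m x) k.
Proof.
by apply: eq_from_tnth => i; rewrite /window !tnth_mktuple /shiftn addnA.
Qed.

Lemma blocks_add {A : finType} {d} (f : d.-tuple A -> seq A) x m n :
  blocks f x (m + n) = blocks f x m ++ blocks f (shiftn m x) n.
Proof.
rewrite /blocks iotaD map_cat flatten_cat add0n; congr (_ ++ _).
rewrite -[in iota m n](addn0 m) iotaDl -map_comp; congr flatten; apply: eq_map => k /=.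
by rewrite window_shift.
Qed.

Lemma blocks1 {A : finType} {d} (f : d.-tuple A -> seq A) x :
  blocks f x 1 = f (window d x 0).
Proof. by rewrite /blocks /= cats0. Qed.

Lemma size_blocks {A : finType} {d} (f : d.-tuple A -> seq A) x m :
  (forall u, 0 < size (f u))%N -> (m <= size (blocks f x m))%N.
Proof.
move=> hf; elim: m x => [|m IH] x //.
rewrite -addn1 blocks_add size_cat blocks1 leq_add //; exact: IH.
Qed.

Lemma dill_blocks {A : finType} {d} (f : d.-tuple A -> seq A) x m i :
  (forall u, 0 < size (f u))%N ->
  (i < size (blocks f x m))%N -> dill f x i = nth (x 0) (blocks f x m) i.
Proof.
move=> hf him; rewrite /dill -/(blocks f x i.+1).
case: (leqP m i.+1) => hm.
  by rewrite -(subnKC hm) blocks_add nth_cat him.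
rewrite -(subnKC (ltnW hm)) blocks_add nth_cat.
by have := size_blocks f x i.+1 hf => ->.
Qed.
Arguments dill_blocks {A d f x m i}.

Lemma dill_shift {A : finType} {d} (f : d.-tuple A -> seq A) x m j :
  (forall u, 0 < size (f u))%N ->
  dill f x (size (blocks f x m) + j) = dill f (shiftn m x) j.
Proof.
move=> hf.
have hs := size_blocks f (shiftn m x) j.+1 hf.
have hlt : (size (blocks f x m) + j < size (blocks f x (m + j.+1)))%N.
  by rewrite blocks_add size_cat ltn_add2l.
rewrite (dill_blocks hf hlt) blocks_add nth_cat ltnNge leq_addr /= addKn.
rewrite /dill -/(blocks f (shiftn m x) j.+1).
exact: set_nth_default.
Qed.

Lemma blocks_agree {A : finType} {d} (f : d.-tuple A -> seq A) x y m :
  (forall j, (j.+1 < m + d)%N -> x j = y j) -> blocks f x m = blocks f y m.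
Proof.
move=> H; rewrite /blocks; congr flatten; apply/eq_in_map => k.
rewrite mem_iota add0n => km; congr f; apply: eq_from_tnth => i.
rewrite /window !tnth_mktuple; apply: H.
have := ltn_ord i; lia.
Qed.

Lemma dill_agree {A : finType} {d} (f : d.-tuple A -> seq A) x y m i :
  (forall u, 0 < size (f u))%N ->
  (forall j, (j.+1 < m + d)%N -> x j = y j) ->
  (i < size (blocks f x m))%N -> dill f x i = dill f y i.
Proof.
move=> hf H hi; rewrite (dill_blocks hf hi).
have hi' := hi; rewrite (blocks_agree f _ _ _ H) in hi'.
rewrite (dill_blocks hf hi') (blocks_agree f _ _ _ H); exact: set_nth_default.
Qed.

Lemma dill_period {A : finType} {d} (f : d.-tuple A -> seq A) x n :
  (forall u, 0 < size (f u))%N ->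
  (forall j, x (n + j) = x j) ->
  forall t j, dill f x (t * size (blocks f x n) + j) = dill f x j.
Proof.
move=> hf H; have ex : shiftn n x = x by apply: funext => j; exact: H.
elim=> [|t IH] j; first by rewrite mul0n add0n.
by rewrite mulSn -addnA dill_shift // ex IH.
Qed.


Lemma hamp_split {A : finType} (x y : nat -> A) a b :
  hamp x y (a + b) = (hamp x y a + \sum_(k < b) (x (a + k) != y (a + k)))%N.
Proof. by rewrite /hamp big_split_ord. Qed.

Lemma hamw_nth {A : finType} (a0 : A) (u v : seq A) :
  size u = size v ->
  hamw u v = \sum_(i < size u) (nth a0 u i != nth a0 v i).
Proof.
elim: u v => [|b u IH] [|c v] //=; first by rewrite big_ord0.
move=> [] /IH h; rewrite /hamw /= -/(hamw u v) h big_ord_recl /=.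
by [].
Qed.

Lemma uniform_size {A : finType} {d} (f : d.-tuple A -> seq A) :
  uniform f -> forall u, size (f u) = lower_norm f.
Proof.
move=> hu u; apply/eqP; rewrite eqn_leq; apply/andP; split.
  by rewrite hu /upper_norm (leq_bigmax_cond u).
have := @bigmin_le _ nat _ (upper_norm f) u (fun u => size (f u)); rewrite minEnat; exact.
Qed.

Lemma size_blocks_unif {A : finType} {d} (f : d.-tuple A -> seq A) L :
  (forall u, size (f u) = L) -> forall x m, size (blocks f x m) = (m * L)%N.
Proof.
move=> hs x m; elim: m x => [|m IH] x; first by rewrite /blocks.
by rewrite -addn1 blocks_add size_cat IH blocks1 hs mulnDl mul1n.
Qed.

Lemma hamw_le_Dmax {A : finType} {d} (f : d.-tuple A -> seq A) u v :
  size (f u) = size (f v) -> (hamw (f u) (f v) <= Dmax f)%N.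
Proof.
move=> h; rewrite /Dmax; apply: leq_trans (leq_bigmax_cond u isT).
by apply: (leq_bigmax_cond v (P := fun v => size (f u) == size (f v))); apply/eqP.
Qed.

Lemma window_neq_le {A : finType} d (x y : nat -> A) k :
  ((window d x k != window d y k) <= \sum_(i < d) (x (k + i) != y (k + i)))%N.
Proof.
case: eqP => [_|ne] //=; rewrite lt0n; apply/negP => /eqP h0; apply: ne.
apply: eq_from_tnth => i; rewrite /window !tnth_mktuple.
have hle : ((x (k + i) != y (k + i)) <= \sum_(j < d) (x (k + j) != y (k + j)))%N.
  by rewrite (bigD1 i) //= leq_addr.
by move: hle; rewrite h0; case: eqP.
Qed.

Lemma sum_windows_le {A : finType} d (x y : nat -> A) m :
  (\sum_(k < m) (window d x k != window d y k) <= d * hamp x y (m + d))%N.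
Proof.
have h1 : (\sum_(k < m) (window d x k != window d y k) <=
    \sum_(k < m) \sum_(i < d) (x (k + i) != y (k + i)))%N.
  by apply: leq_sum => k _; exact: window_neq_le.
apply: leq_trans h1 _.
rewrite exchange_big /=.
have h2 : (\sum_(i < d) \sum_(k < m) (x (k + i) != y (k + i)) <=
    \sum_(i < d) hamp x y (m + d))%N.
  apply: leq_sum => i _.
  have hm : (i + m <= m + d)%N by rewrite addnC leq_add2l ltnW.
  apply: leq_trans (hamp_mono x y _ _ hm).
  by rewrite hamp_split; under eq_bigr do rewrite addnC; exact: leq_addl.
apply: leq_trans h2 _.
by rewrite sum_nat_const card_ord.
Qed.

Lemma hamp_dill_unif {A : finType} {d} (f : d.-tuple A -> seq A) L
  (hs : forall u, size (f u) = L) (hf : forall u, (0 < size (f u))%N) x y m :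
  (hamp (dill f x) (dill f y) (m * L) <=
     Dmax f * \sum_(k < m) (window d x k != window d y k))%N.
Proof.
elim: m => [|m IH]; first by rewrite mul0n /hamp big_ord0.
rewrite mulSnr hamp_split big_ord_recr /= mulnDr leq_add //.
have ex : forall z i, (i < L)%N ->
    dill f z (m * L + i) = nth (z 0) (f (window d z m)) i.
  move=> z i iL; rewrite -(size_blocks_unif f L hs z m) dill_shift //.
  have hi : (i < size (blocks f (shiftn m z) 1))%N by rewrite blocks1 hs.
  rewrite (dill_blocks hf hi) blocks1 -[m]addn0 window_shift addn0.
  by apply: set_nth_default; rewrite hs.
rewrite (eq_bigr (fun i : 'I_L => (nth (x 0) (f (window d x m)) i !=
                                   nth (x 0) (f (window d y m)) i : nat))); last first.
  move=> i _; rewrite !ex //.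
  by rewrite [nth (y 0) _ _](@set_nth_default _ _ (x 0)) // hs.
case: eqP => [->|ne].
  by rewrite big1 // => i _; rewrite eqxx.
rewrite muln1 -(hs (window d x m)) -hamw_nth; last by rewrite !hs.
by apply: hamw_le_Dmax; rewrite !hs.
Qed.


Lemma hamp_dill_bound {A : finType} {d} (f : d.-tuple A -> seq A)
  (hu : uniform f) (hf : forall u, (0 < size (f u))%N) x y l :
  (hamp (dill f x) (dill f y) l <=
    Dmax f * (d * (hamp x y (l %/ lower_norm f) + d.+1)))%N.
Proof.
set L := lower_norm f; set n := (l %/ L)%N.
have hs := uniform_size f hu.
have L0 : (0 < L)%N by rewrite /L -(hs (window d x 0)).
apply: leq_trans (hamp_mono _ _ _ _ (ltnW (ltn_ceil l L0))) _.
apply: leq_trans (hamp_dill_unif f L hs hf x y n.+1) _.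
rewrite leq_mul2l; apply/orP; right.
apply: leq_trans (sum_windows_le d x y n.+1) _.
rewrite leq_mul2l; apply/orP; right.
rewrite hamp_split hampS -addnA leq_add2l -[d.+1]add1n; apply: leq_add; first exact: leq_b1.
have h : (\sum_(k < d) (x (n.+1 + k) != y (n.+1 + k)) <= \sum_(k < d) 1)%N.
  by apply: leq_sum => i _; exact: leq_b1.
by apply: leq_trans h _; rewrite sum_nat_const card_ord muln1.
Qed.

Lemma unif_lip (R : realType) {A : finType} {d} (f : d.-tuple A -> seq A)
  (hu : uniform f) (hf : forall u, (0 < size (f u))%N) x y :
  (besic R (dill f x) (dill f y) <=
     ((d * Dmax f)%:R / (lower_norm f)%:R : R)%:E * besic R x y)%E.
Proof.
set L := lower_norm f.
have hs := uniform_size f hu.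
have L0 : (0 < L)%N by rewrite /L -(hs (window d x 0)).
set c : R := ((d * Dmax f)%:R / L%:R)%R.
have c0 : (0 <= c)%R by rewrite /c divr_ge0.
rewrite [besic R x y]besic_fin; set b := fine (besic R x y).
have b0 : (0 <= b)%R by rewrite /b fine_ge0 // besic_ge0.
rewrite -EFinM; apply/lee_addgt0Pr => e e0.
set e1 : R := (e / (2 * (c + 1)))%R.
have e10 : (0 < e1)%R by rewrite /e1 divr_gt0 // mulr_gt0 // ltr_wpDl.
have [N1 HN1] : exists N, forall n, (N <= n)%N ->
    (((hamp x y n)%:R / n%:R : R)%R%:E < (b + e1)%:E)%E.
  apply: esup_lt_ev; rewrite -/(besic R x y) besic_fin lte_fin -/b.
  by rewrite ltrDl.
have [N2 HN2] : exists N : nat, (2 * c * d.+1%:R / e < N%:R)%R.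
  exists (Num.truncn (2 * c * d.+1%:R / e)%R).+1; exact: truncnS_gt.
apply: (@esup_le_ev _ _ _ ((N1 + N2).+1 * L)) => l hl.
set n := (l %/ L)%N.
have hn : ((N1 + N2).+1 <= n)%N.
  by rewrite -(mulnK (N1 + N2).+1 L0) leq_div2r.
have n0 : (0 < n)%N by apply: leq_trans hn.
have hnl : (n * L <= l)%N by rewrite leq_trunc_div.
have l0 : (0 < l)%N by apply: leq_trans hnl; rewrite muln_gt0 n0.
have hb := hamp_dill_bound f hu hf x y l; rewrite -/L -/n in hb.
set h := hamp x y n in hb.
set hF := hamp (dill f x) (dill f y) l in hb *.
rewrite lee_fin.
have Rn0 : (0 < n%:R :> R)%R by rewrite ltr0n.
have RL0 : (0 < L%:R :> R)%R by rewrite ltr0n.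
have Rl0 : (0 < l%:R :> R)%R by rewrite ltr0n.
have step1 : (hF%:R / l%:R <= (Dmax f * (d * (h + d.+1)))%:R / (n * L)%:R :> R)%R.
  rewrite ler_pdivrMr // mulrAC ler_pdivlMr ?ltr0n ?muln_gt0 ?n0 //.
  rewrite -!natrM ler_nat; apply: leq_mul => //.
apply: le_trans step1 _.
have eq1 : ((Dmax f * (d * (h + d.+1)))%:R / (n * L)%:R =
            c * (h%:R / n%:R) + c * (d.+1%:R / n%:R) :> R)%R.
  rewrite /c !natrM natrD; field.
  by rewrite !pnatr_eq0 -!lt0n n0 L0.
rewrite eq1.
have q1 : (h%:R / n%:R < b + e1 :> R)%R.
  by rewrite -lte_fin; apply: HN1; exact: leq_trans (leq_addr N2 N1) (ltnW hn).
have q2 : (c * e1 <= e / 2 :> R)%R.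
  have hc1 : (0 < 2 * (c + 1) :> R)%R by rewrite mulr_gt0 // ltr_wpDl.
  rewrite /e1 mulrA ler_pdivrMr //.
  have -> : (e / 2 * (2 * (c + 1)) = c * e + e :> R)%R by field.
  by rewrite lerDl ltW.
have q3 : (c * (d.+1%:R / n%:R) <= e / 2 :> R)%R.
  have hN2n : (N2%:R <= n%:R :> R)%R.
    by rewrite ler_nat; exact: leq_trans (leq_addl N1 N2) (ltnW hn).
  rewrite mulrA ler_pdivrMr // -ler_pdivrMl ?divr_gt0 //.
  apply: le_trans hN2n; apply: ltW; apply: le_lt_trans HN2.
  have -> : ((e / 2)^-1 * (c * d.+1%:R) = 2 * c * d.+1%:R / e :> R)%R.
    by field; rewrite gt_eqF.
  by [].
have q4 : (c * (h%:R / n%:R) <= c * (b + e1) :> R)%R by rewrite ler_wpM2l // ltW.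
lra.
Qed.


Definition cseq {A : Type} (a : A) : nat -> A := fun _ => a.
Definition ext {A : Type} (a : A) (p : seq A) : nat -> A := fun j => nth a p j.
Definition catT {A : Type} (a : A) (q : seq A) (T : nat -> A) : nat -> A :=
  fun j => if (j < size q)%N then nth a q j else T (j - size q)%N.
Definition perT {A : Type} (a : A) (w : seq A) : nat -> A :=
  fun j => nth a w (j %% size w).

Lemma shift_catT {A : Type} (a : A) q T : shiftn (size q) (catT a q T) = T.
Proof.
apply: funext => j; rewrite /shiftn /catT ltnNge leq_addr /=; congr T; lia.
Qed.

Lemma shift_ext {A : Type} (a : A) p : shiftn (size p) (ext a p) = cseq a.
Proof. by apply: funext => j; rewrite /shiftn /ext nth_default // leq_addr. Qed.

Lemma shift_cseq {A : Type} (a : A) m : shiftn m (cseq a) = cseq a.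
Proof. by []. Qed.

Lemma blocks_catT {A : finType} {d} (f : d.-tuple A -> seq A) a q T :
  (forall j, (j.+1 < d)%N -> T j = a) ->
  blocks f (catT a q T) (size q) = blocks f (ext a q) (size q).
Proof.
move=> HT; apply: blocks_agree => j hj; rewrite /catT /ext.
case: ltnP => // hq; rewrite nth_default // HT //; lia.
Qed.

Lemma size_blocks_cseq {A : finType} {d} (f : d.-tuple A -> seq A) a m :
  size (blocks f (cseq a) m) = (m * size (f (window d (cseq a) 0)))%N.
Proof.
elim: m => [|m IH]; first by [].
by rewrite -addn1 blocks_add size_cat IH shift_cseq blocks1 mulnDl mul1n.
Qed.

Lemma sigma_period {A : finType} {d} (f : d.-tuple A -> seq A) a
  (hf : forall u, (0 < size (f u))%N) t j :
  dill f (cseq a) (t * size (f (window d (cseq a) 0)) + j) = dill f (cseq a) j.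
Proof.
by rewrite -blocks1; apply: dill_period => //.
Qed.

Lemma shift_inv (R : realType) {A : finType} (u v X : nat -> A) P B del :
  besic R u v = 0%E -> (0 < P)%N ->
  (forall t j, X (t * P + j) = X j) ->
  (forall i, u (B + del + i) = X i) -> (forall i, v (B + i) = X i) ->
  forall j, X (j + del) = X j.
Proof.
move=> h0 P0 HX hu hv j; case: (eqVneq (X (j + del)%N) (X j)) => // hne; exfalso.
apply: (@besic_io R A u v (B + del + j)%N P P0 _ h0) => t.
rewrite (_ : (B + del + j + t * P) = B + del + (t * P + j))%N; last first.
  by rewrite -addnA [(j + _)%N]addnC.
rewrite hu HX -addnA hv addnCA HX addnC eq_sym //.
Qed.

Definition Pw {A : finType} {d} (f : d.-tuple A -> seq A) (a : A) (p : seq A) :=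
  blocks f (ext a p) (size p).

Lemma sigma_shift (R : realType) {A : finType} {d} (f : d.-tuple A -> seq A)
  (hf : forall u, (0 < size (f u))%N) (a : A)
  (H1 : forall x y : nat -> A, besic R x y = 0%E ->
          besic R (dill f x) (dill f y) = 0%E) p j :
  dill f (cseq a) (j + size (Pw f a p)) = dill f (cseq a) j.
Proof.
apply: (@shift_inv R A (dill f (ext a p)) (dill f (cseq a)) _
          (size (f (window d (cseq a) 0))) 0).
- apply: H1; apply: (@besic_ev R A _ _ (size p)) => k hk.
  by rewrite /ext /cseq nth_default.
- exact: hf.
- exact: sigma_period.
- by move=> i; rewrite add0n dill_shift // shift_ext.
- by [].
Qed.

Lemma window_ext {A : finType} {d} (a : A) (u : d.-tuple A) :
  window d (ext a u) 0 = u.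
Proof.
by apply: eq_from_tnth => i; rewrite /window tnth_mktuple /ext add0n (tnth_nth a).
Qed.

Lemma size_Pw_tuple {A : finType} {d} (f : d.-tuple A -> seq A) a
  (u : d.-tuple A) : (1 <= d)%N ->
  size (Pw f a u) = (size (f u) + size (Pw f a (behead u)))%N.
Proof.
move=> hd; rewrite /Pw size_tuple size_behead size_tuple.
have -> : blocks f (ext a u) d = blocks f (ext a u) (1 + d.-1) by rewrite add1n prednK.
rewrite blocks_add size_cat blocks1 window_ext; congr (_ + size _)%N.
by congr blocks; apply: funext => j; rewrite /shiftn /ext add1n nth_behead.
Qed.

Lemma nonunif_pair {A : finType} {d} (f : d.-tuple A -> seq A) a :
  (1 <= d)%N -> (exists u v, size (f u) != size (f v)) ->
  exists q q', size q = size q' /\ (size (Pw f a q) < size (Pw f a q'))%N.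
Proof.
move=> hd [u [v huv]].
suff [q [q' [e ne]]] : exists q q', size q = size q' /\ size (Pw f a q) != size (Pw f a q').
  case: (ltngtP (size (Pw f a q)) (size (Pw f a q'))) ne => // h _.
    by exists q, q'.
  by exists q', q.
case: (eqVneq (size (Pw f a (behead u))) (size (Pw f a (behead v)))) => he.
  exists u, v; split; first by rewrite !size_tuple.
  by rewrite !size_Pw_tuple // he eqn_add2r.
by exists (behead u), (behead v); rewrite !size_behead !size_tuple.
Qed.

Lemma core (R : realType) {A : finType} {d} (f : d.-tuple A -> seq A)
  (hd : (1 <= d)%N) (hf : forall u, (0 < size (f u))%N) (a : A)
  (H1 : forall x y : nat -> A, besic R x y = 0%E ->
          besic R (dill f x) (dill f y) = 0%E)
  q q' (hq : size q = size q') (hB : (size (Pw f a q) < size (Pw f a q'))%N)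
  p : forall i, dill f (ext a p) i = dill f (cseq a) i.
Proof.
set del := (size (Pw f a q') - size (Pw f a q))%N.
have del0 : (0 < del)%N by rewrite subn_gt0.
set K := (del + d + 1)%N.
set w := nseq d.-1 a ++ p ++ nseq K a.
set T := perT a w.
set sw := size w.
have hsw : sw = (d.-1 + size p + K)%N by rewrite /sw /w !size_cat !size_nseq addnA.
have T1 : forall j, (j < sw)%N -> T j = nth a w j.
  by move=> j hj; rewrite /T /perT -/sw modn_small.
have T2 : forall j, T (sw + j) = T j.
  by move=> j; rewrite /T /perT -/sw modnDl.
have T3 : forall j, (j < d.-1)%N -> T j = a.
  move=> j hj; rewrite T1; last by rewrite hsw; lia.
  by rewrite /w nth_cat size_nseq hj nth_nseq hj.
have T4 : forall j, (j < size p + K)%N -> T (d.-1 + j) = ext a p j.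
  move=> j hj; rewrite T1; last by rewrite hsw; lia.
  rewrite /w nth_cat size_nseq ltnNge leq_addr /= addKn nth_cat /ext.
  case: ltnP => // hjp; rewrite nth_nseq nth_default //.
  by case: ifP.
have T5 : forall j, (j < K + d.-1)%N -> T (d.-1 + size p + j) = a.
  move=> j hj; case: (ltnP j K) => hjK.
    rewrite T1; last by rewrite hsw; lia.
    rewrite /w -addnA nth_cat size_nseq ltnNge leq_addr /= addKn.
    by rewrite nth_cat ltnNge leq_addr /= addKn nth_nseq hjK.
  have -> : (d.-1 + size p + j = sw + (j - K))%N by rewrite hsw; lia.
  by rewrite T2 T3 //; lia.
set X := dill f T.
set Lw := size (blocks f T sw).
have Lw0 : (0 < Lw)%N.
  apply: leq_trans (size_blocks f T sw hf); rewrite hsw; lia.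
have XP : forall t j, X (t * Lw + j) = X j.
  by apply: dill_period => // j; exact: T2.
have Xdel : forall j, X (j + del) = X j.
  apply: (@shift_inv R A (dill f (catT a q' T)) (dill f (catT a q T)) X Lw
            (size (Pw f a q)) del) => //.
  - apply: H1; apply: (@besic_ev R A _ _ (size q)) => k hk.
    by rewrite /catT -hq ltnNge hk.
  - move=> i; rewrite subnKC; last exact: ltnW.
    rewrite /Pw -(blocks_catT f a q' T) //; last by move=> j hj; apply: T3; lia.
    by rewrite dill_shift // shift_catT.
  - move=> i; rewrite /Pw -(blocks_catT f a q T) //; last by move=> j hj; apply: T3; lia.
    by rewrite dill_shift // shift_catT.
set r := size (f (window d (cseq a) 0)).
have r0 : (0 < r)%N by exact: hf.
set sig := dill f (cseq a).
have sigP : forall t j, sig (t * r + j) = sig j by move=> t j; exact: sigma_period.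
set s0 := size (blocks f T (d.-1 + size p)).
have Xs : forall i, (i < K * r)%N -> X (s0 + i) = sig i.
  move=> i hi; rewrite /X /s0 dill_shift //; symmetry.
  apply: (@dill_agree _ _ f _ _ K) => //.
    by move=> j hj; rewrite /cseq /shiftn T5 //; lia.
  by rewrite size_blocks_cseq.
have Xdel_it : forall m j, X (j + m * del) = X j.
  elim=> [|m IH] j; first by rewrite mul0n addn0.
  by rewrite mulSn addnA IH Xdel.
have Xr : forall j, X (j + r) = X j.
  move=> j.
  have jL : (j <= j * Lw)%N by rewrite leq_pmulr.
  set D := (s0 + j * Lw - j)%N.
  have hD := divn_eq D del; have hR := ltn_pmod D del0.
  set Q := (D %/ del)%N in hD; set Rm := (D %% del)%N in hD hR.
  set e := (del - Rm)%N.
  have he : (j + (Q.+1) * del = j * Lw + (s0 + e))%N.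
    rewrite mulSn /e /D in hD *; move: hD jL hR; set QD := (Q * del)%N; set JL := (j * Lw)%N.
    lia.
  have he2 : (e + r < K * r)%N by rewrite /K /e; nia.
  rewrite -[X in X = _](Xdel_it Q.+1) -(Xdel_it Q.+1 j).
  rewrite addnAC he -addnA !XP -addnA Xs // Xs; last by apply: leq_trans he2; lia.
  by rewrite addnC -{1}(mul1n r) sigP.
have Xr_it : forall t j, X (j + t * r) = X j.
  elim=> [|t IH] j; first by rewrite mul0n addn0.
  by rewrite mulSn addnA IH Xr.
have Xsall : forall i, X (s0 + i) = sig i.
  move=> i; rewrite {1}(divn_eq i r) [(_ * r + _)%N]addnC addnA Xr_it Xs; last first.
    apply: leq_trans (ltn_pmod i r0) _; rewrite leq_pmull //; lia.
  by rewrite {2}(divn_eq i r) sigP.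
set mu := size (blocks f T d.-1).
have hag : blocks f (shiftn d.-1 T) (size p) = Pw f a p.
  apply: blocks_agree => j hj; rewrite /shiftn T4 //; lia.
have hs0 : s0 = (mu + size (Pw f a p))%N by rewrite /s0 blocks_add size_cat hag.
have PX : forall i, (i < size (Pw f a p))%N -> X (mu + i) = nth a (Pw f a p) i.
  move=> i hi; rewrite /X /mu dill_shift //.
  have hi' : (i < size (blocks f (shiftn d.-1 T) (size p)))%N by rewrite hag.
  rewrite (dill_blocks hf hi') hag; exact: set_nth_default.
have sigS := @sigma_shift R A d f hf a H1 p.
set B := size (Pw f a p) in hs0 PX sigS *.
move=> i; case: (ltnP i B) => hi.
  have hi' : (i < size (blocks f (ext a p) (size p)))%N by [].
  rewrite (dill_blocks hf hi') -/(Pw f a p) (set_nth_default a) // -PX //.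
  rewrite -(Xr_it B) (_ : (mu + i + B * r) = s0 + (i + B * r - B))%N; last first.
    rewrite hs0; have : (B <= B * r)%N by rewrite leq_pmulr.
    move: (B * r)%N => BR; lia.
  rewrite Xsall -[LHS](sigS (i + B * r - B)) subnK; last by apply: leq_trans (leq_addl _ _); rewrite leq_pmulr.
  by rewrite addnC -/sig sigP.
rewrite -(subnKC hi) dill_shift // shift_ext addnC /sig sigS //.
Qed.

Lemma allsize_uniform {A : finType} {d} (f : d.-tuple A -> seq A) :
  (forall u v, size (f u) = size (f v)) -> uniform f.
Proof.
move=> H.
have hs : forall u, size (f u) = upper_norm f.
  move=> u; apply/eqP; rewrite eqn_leq (leq_bigmax_cond u) //=.
  by apply/bigmax_leqP => i _; rewrite (H i u).
rewrite /uniform /lower_norm; apply: (big_ind (fun n => n = upper_norm f)) => //.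
  by move=> m n -> ->; rewrite minnn.
Qed.

Lemma imp13 (R : realType) {A : finType} {d} (f : d.-tuple A -> seq A)
  (hd : (1 <= d)%N) (hf : forall u, (0 < size (f u))%N)
  (H1 : forall x y : nat -> A, besic R x y = 0%E ->
          besic R (dill f x) (dill f y) = 0%E) :
  (forall x y : nat -> A, dill f x =1 dill f y) \/ uniform f.
Proof.
case: (pselect (uniform f)) => hu; [by right | left].
move=> x y; set a := x 0.
have [u [v huv]] : exists u v, size (f u) != size (f v).
  apply: contrapT => hn; apply: hu; apply: allsize_uniform => u v.
  apply/eqP; apply: contrapT => /negP hne; apply: hn; by exists u, v.
have [q [q' [hq hB]]] := nonunif_pair f a hd (ex_intro _ u (ex_intro _ v huv)).
have hc := @core R A d f hd hf a H1 q q' hq hB.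
have Hz : forall (z : nat -> A) n, dill f z n = dill f (cseq a) n.
  move=> z n; rewrite -(hc (mkseq z (n + d))).
  apply: (@dill_agree _ _ f _ _ n.+1) => //.
    move=> j hj; rewrite /ext nth_mkseq //; lia.
  exact: size_blocks.
by move=> n; rewrite !Hz.
Qed.

Lemma imp32 (R : realType) {A : finType} {d} (f : d.-tuple A -> seq A)
  (hf : forall u, (0 < size (f u))%N) :
  ((forall x y : nat -> A, dill f x =1 dill f y) \/ uniform f) ->
  forall x y : nat -> A,
    (besic R (dill f x) (dill f y) <=
       ((d * Dmax f)%:R / (lower_norm f)%:R : R)%:E * besic R x y)%E.
Proof.
case=> [hc|hu] x y; last exact: unif_lip.
rewrite (@besic_ev R A _ _ 0) //; last by move=> j _; exact: hc.
by apply: mule_ge0; [rewrite lee_fin divr_ge0 | exact: besic_ge0].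
Qed.

Lemma imp21 (R : realType) {A : finType} {d} (f : d.-tuple A -> seq A) :
  (forall x y : nat -> A,
    (besic R (dill f x) (dill f y) <=
       ((d * Dmax f)%:R / (lower_norm f)%:R : R)%:E * besic R x y)%E) ->
  forall x y : nat -> A, besic R x y = 0%E ->
          besic R (dill f x) (dill f y) = 0%E.
Proof.
move=> H x y h0; apply/eqP; rewrite eq_le besic_ge0 andbT.
by have := H x y; rewrite h0 mule0.
Qed.


Theorem mainTheorem3 (R : realType) (A : finType) (d : nat)
    (f : d.-tuple A -> seq A) (hd : (1 <= d)%N)
    (hf : forall u, (0 < size (f u))%N) :
  let F := dill f in
  [/\ (forall x y : nat -> A, besic R x y = 0%E -> besic R (F x) (F y) = 0%E)
        <-> (forall x y : nat -> A,
               (besic R (F x) (F y) <=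
                ((d * Dmax f)%:R / (lower_norm f)%:R : R)%:E * besic R x y)%E),
      (forall x y : nat -> A,
               (besic R (F x) (F y) <=
                ((d * Dmax f)%:R / (lower_norm f)%:R : R)%:E * besic R x y)%E)
        <-> ((forall x y : nat -> A, F x =1 F y) \/ uniform f)
    & ((forall x y : nat -> A, F x =1 F y) \/ uniform f)
        <-> (forall x y : nat -> A, besic R x y = 0%E -> besic R (F x) (F y) = 0%E)].
Proof.
move=> F.
have h13 := @imp13 R A d f hd hf.
have h32 := @imp32 R A d f hf.
have h21 := @imp21 R A d f.
split; split.
- by move=> H; apply: h32; apply: h13.
- exact: h21.
- by move=> H; apply: h13; apply: h21.
- exact: h32.
- by move=> H; apply: h21; apply: h32.
- exact: h13.
Qed.
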